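(* For all integers $k\ge2$ and $n\ge2$ and all valuations $v$, we have $b^e(v,P^{n+k-1,1})>b^e(v,P^{n,k})$.
   Context: Let $F$ be a continuous, atomless cumulative distribution function of valuations on the nonnegative reals. For an integer $m\ge2$ define $b^e(v,m)=v-F(v)^{-(m-1)}\int_0^vF(u)^{m-1}du$. For a probability distribution $P=(p_j)_{j\ge0}$ on the number of agents define $b^e(v,P)=\sum_{j\ge2}p_jb^e(v,j)$. Write $P_{x\ge i}=\sum_{x\ge i}p_x$. Write $P<P'$ iff there exists $l$ such that $P_{x\ge i}=P'_{x\ge i}$ for all $i<l$ and $P_{x\ge i}<P'_{x\ge i}$ for all $i\ge l$. Standing assumption: whenever $P<P'$, we have $b^e(v,P)<b^e(v,P')$ for all $v$. Let $\gamma_A$ be a probability distribution on $\{1,\dots,\kappa\}$, for a fixed integer $\kappa\ge2$, with $\gamma_A(1)<1$. For $n\ge2$ and $k\ge1$, $P^{n,k}$ denotes the distribution of $k+X_1+\dots+X_{n-1}$, where the $X_j$ are i.i.d. with distribution $\gamma_A$. *)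

(* Defs.v *)
From Stdlib Require Import Reals Lra Lia.
From Coquelicot Require Import Coquelicot.
Open Scope R_scope.

Definition is_valuation_cdf (F : R -> R) : Prop :=
  (forall x, continuous F x) /\
  (forall x y, x <= y -> F x <= F y) /\
  (forall x, x <= 0 -> F x = 0) /\
  is_lim F p_infty 1.

Definition be (F : R -> R) (v : R) (m : nat) : R :=
  v - / (F v ^ (m - 1)) * RInt (fun u => F u ^ (m - 1)) 0 v.

Definition is_dist (P : nat -> R) : Prop :=
  (forall j, 0 <= P j) /\ is_series P 1.

Definition be_dist (F : R -> R) (v : R) (P : nat -> R) : R :=
  Series (fun j => if (2 <=? j)%nat then P j * be F v j else 0).

Definition tail (P : nat -> R) (i : nat) : R := Series (fun x => P (i + x)%nat).

Definition dist_lt (P P' : nat -> R) : Prop :=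
  exists l : nat,
    (forall i, (i < l)%nat -> tail P i = tail P' i) /\
    (forall i, (l <= i)%nat -> tail P i < tail P' i).

(* Standing assumption (for valuations v at which b^e is defined, i.e. F v > 0). *)
Definition standing_assumption (F : R -> R) : Prop :=
  forall P P', is_dist P -> is_dist P' -> dist_lt P P' ->
    forall v, 0 < F v -> be_dist F v P < be_dist F v P'.

Definition is_gammaA (kappa : nat) (g : nat -> R) : Prop :=
  (forall j, 0 <= g j) /\
  (forall j, (j < 1)%nat \/ (kappa < j)%nat -> g j = 0) /\
  sum_f 1 kappa g = 1 /\
  g 1%nat < 1.

Fixpoint conv_pow (g : nat -> R) (m : nat) (x : nat) : R :=
  match m with
  | O => if (x =? 0)%nat then 1 else 0
  | S m' => sum_f_R0 (fun y => conv_pow g m' y * g (x - y)%nat) x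
  end.

(* P^{n,k} : law of k + X_1 + ... + X_{n-1} *)
Definition Pnk (g : nat -> R) (n k : nat) : nat -> R :=
  fun x => if (k <=? x)%nat then conv_pow g (n - 1) (x - k) else 0.

(* Main.v *)
Require Import Defs.
From Stdlib Require Import Reals Lra Lia.
From Coquelicot Require Import Coquelicot.
Open Scope R_scope.

Lemma cont_pow (F : R -> R) p x : (forall y, continuous F y) -> continuous (fun u => F u ^ p) x.
Proof.
  intros HF. induction p as [|p IH].
  - apply continuous_ext with (f := fun _ => 1). intros; simpl; auto. apply continuous_const.
  - apply continuous_ext with (f := fun u => mult (F u) (F u ^ p)).
    intros; reflexivity. apply (@continuous_mult R_UniformSpace R_AbsRing); auto.
Qed.

Lemma RInt_lt_sub (f g : R -> R) a c d b :
  a <= c -> c < d -> d <= b ->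
  (forall x, continuous f x) -> (forall x, continuous g x) ->
  (forall x, a <= x <= b -> f x <= g x) ->
  (forall x, c < x < d -> f x < g x) ->
  RInt f a b < RInt g a b.
Proof.
  intros Hac Hcd Hdb Cf Cg Hle Hlt.
  assert (Ef : forall x y, ex_RInt f x y) by (intros; apply (@ex_RInt_continuous R_CompleteNormedModule); auto).
  assert (Eg : forall x y, ex_RInt g x y) by (intros; apply (@ex_RInt_continuous R_CompleteNormedModule); auto).
  rewrite <- (RInt_Chasles f a c b), <- (RInt_Chasles f c d b) by auto.
  rewrite <- (RInt_Chasles g a c b), <- (RInt_Chasles g c d b) by auto.
  unfold plus; simpl.
  assert (H1 : RInt f a c <= RInt g a c).
  { apply RInt_le; auto. intros; apply Hle; lra. }
  assert (H2 : RInt f d b <= RInt g d b).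
  { apply RInt_le; auto. intros; apply Hle; lra. }
  assert (H3 : RInt f c d < RInt g c d).
  { apply RInt_lt; auto. }
  lra.
Qed.

Section H.
Variable F : R -> R.
Hypothesis HF : is_valuation_cdf F.
Variable v : R.
Hypothesis Hv : 0 < F v.

Lemma F_nonneg x : 0 <= x -> 0 <= F x.
Proof.
  destruct HF as (_ & Hm & H0 & _).
  intros. rewrite <- (H0 0) by lra. apply Hm; auto.
Qed.

Lemma v_pos : 0 < v.
Proof.
  destruct HF as (_ & _ & H0 & _).
  destruct (Rle_dec v 0) as [H|H]; [rewrite H0 in Hv; lra | lra].
Qed.

Lemma be_0 : be F v 0 = 0.
Proof. unfold be. simpl. rewrite RInt_const. unfold scal; simpl. unfold mult; simpl.
  rewrite Rinv_1. ring. Qed.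
Lemma be_1 : be F v 1 = 0.
Proof. unfold be. simpl. rewrite RInt_const. unfold scal; simpl. unfold mult; simpl.
  rewrite Rinv_1. ring. Qed.

Lemma be_incr p : be F v (S p) < be F v (S (S p)).
Proof.
  destruct HF as (HC & Hm & H0 & _).
  pose proof v_pos as vp.
  assert (Hcont : continuity F).
  { intro x. apply continuity_pt_filterlim. apply HC. }
  assert (F0 : F 0 = 0) by (apply H0; lra).
  destruct (IVT_gen F 0 v (F v / 3) Hcont) as [c [Hc Fc]].
  { rewrite F0, Rmin_left, Rmax_right; lra. }
  destruct (IVT_gen F 0 v (2 * F v / 3) Hcont) as [d [Hd Fd]].
  { rewrite F0, Rmin_left, Rmax_right; lra. }
  rewrite Rmin_left, Rmax_right in Hc, Hd by lra.
  assert (Hcd : c < d).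
  { destruct (Rlt_dec c d); auto. assert (F d <= F c) by (apply Hm; lra). lra. }
  assert (Hint : RInt (fun u => F u ^ (S p)) 0 v < RInt (fun u => F v * F u ^ p) 0 v).
  { apply RInt_lt_sub with c d; try lra.
    - intros; apply cont_pow; auto.
    - intros. apply continuous_ext with (f := fun u => mult (F v) (F u ^ p)).
      intros; reflexivity. apply (@continuous_mult R_UniformSpace R_AbsRing). apply continuous_const. apply cont_pow; auto.
    - intros x Hx. simpl. apply Rmult_le_compat_r. apply pow_le, F_nonneg; lra.
      apply Hm; lra.
    - intros x Hx. simpl. apply Rmult_lt_compat_r. apply pow_lt.
      assert (F c <= F x) by (apply Hm; lra). lra.
      assert (F x <= F d) by (apply Hm; lra). lra. }
  assert (Hs : RInt (fun u => F v * F u ^ p) 0 v = F v * RInt (fun u => F u ^ p) 0 v).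
  { apply (RInt_scal (fun u => F u ^ p) 0 v (F v)).
    apply (@ex_RInt_continuous R_CompleteNormedModule). intros; apply cont_pow; auto. }
  rewrite Hs in Hint.
  unfold be.
  replace (S p - 1)%nat with p by lia.
  replace (S (S p) - 1)%nat with (S p) by lia.
  assert (X : 0 < F v ^ p) by (apply pow_lt; lra).
  assert (Key : forall A B : R, A < F v * B -> / F v ^ S p * A < / F v ^ p * B).
  { intros A B HAB. simpl.
    replace (/ (F v * F v ^ p) * A) with (/ F v ^ p * (A / F v)) by (field; lra).
    apply Rmult_lt_compat_l. apply Rinv_0_lt_compat; lra.
    apply Rmult_lt_reg_l with (F v); auto.
    replace (F v * (A / F v)) with A by (field; lra). lra. }
  pose proof (Key _ _ Hint). lra.
Qed.

End H.

Lemma trunc (f : nat -> R) M N : (forall x, (M < x)%nat -> f x = 0) -> (M <= N)%nat ->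
  sum_f_R0 f N = sum_f_R0 f M.
Proof.
  intros Hf HMN. replace N with (M + (N - M))%nat by lia.
  generalize (N - M)%nat as d. induction d.
  - now rewrite Nat.add_0_r.
  - rewrite Nat.add_succ_r, tech5, IHd, Hf by lia. ring.
Qed.

Lemma swap (A : nat -> nat -> R) N :
  sum_f_R0 (fun x => sum_f_R0 (fun y => A y (x - y)%nat) x) N =
  sum_f_R0 (fun y => sum_f_R0 (fun j => A y j) (N - y)) N.
Proof.
  induction N.
  - simpl. reflexivity.
  - rewrite tech5, IHN. rewrite (tech5 (fun y => sum_f_R0 (fun j => A y j) (S N - y))).
    rewrite (tech5 (fun y => A y (S N - y)%nat)).
    rewrite Nat.sub_diag. simpl (sum_f_R0 _ 0).
    rewrite (sum_eq (fun y => sum_f_R0 (fun j => A y j) (S N - y))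
      (fun y => sum_f_R0 (fun j => A y j) (N - y) + A y (S N - y)%nat)).
    + rewrite sum_plus. ring.
    + intros i Hi. replace (S N - i)%nat with (S (N - i)) by lia. apply tech5.
Qed.

Lemma sum_diff (a X Y : nat -> R) N :
  sum_f_R0 (fun y => a y * X y) N - sum_f_R0 (fun y => a y * Y y) N =
  sum_f_R0 (fun y => a y * (X y - Y y)) N.
Proof. induction N; simpl; [ring| rewrite <- IHN; ring]. Qed.

Lemma sum_nonneg (f : nat -> R) N : (forall x, (x <= N)%nat -> 0 <= f x) -> 0 <= sum_f_R0 f N.
Proof.
  induction N; simpl; intros H. apply H; lia.
  assert (0 <= sum_f_R0 f N) by (apply IHN; intros; apply H; lia).
  assert (0 <= f (S N)) by (apply H; lia). lra.
Qed.

Lemma sum_pos (a d : nat -> R) N : (forall x, 0 <= a x) -> (forall x, (x <= N)%nat -> 0 < d x) ->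
  0 < sum_f_R0 a N -> 0 < sum_f_R0 (fun x => a x * d x) N.
Proof.
  intros Ha Hd. induction N; simpl; intros Hs.
  - apply Rmult_lt_0_compat; auto.
  - destruct (Rlt_dec 0 (sum_f_R0 a N)) as [H|H].
    + assert (0 < sum_f_R0 (fun x => a x * d x) N) by (apply IHN; auto).
      assert (0 <= a (S N) * d (S N)) by (apply Rmult_le_pos; auto; apply Rlt_le, Hd; lia). lra.
    + assert (0 <= sum_f_R0 (fun x => a x * d x) N).
      { apply sum_nonneg. intros. apply Rmult_le_pos; auto. apply Rlt_le, Hd; lia. }
      assert (0 < a (S N) * d (S N)).
      { apply Rmult_lt_0_compat; [lra|apply Hd; lia]. }
      lra.
Qed.

Section G.
Variable kappa : nat.
Variable g : nat -> R.
Hypothesis Hk : (2 <= kappa)%nat.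
Hypothesis Hg : is_gammaA kappa g.

Lemma g_nonneg j : 0 <= g j.
Proof. destruct Hg as (H & _). auto. Qed.
Lemma g_zero j : (kappa < j)%nat -> g j = 0.
Proof. destruct Hg as (_ & H & _). intros; apply H; auto. Qed.
Lemma g0 : g 0%nat = 0.
Proof. destruct Hg as (_ & H & _). apply H; lia. Qed.

Lemma c_nonneg m x : 0 <= conv_pow g m x.
Proof.
  revert x; induction m; intros x; simpl.
  - destruct (x =? 0)%nat; lra.
  - apply cond_pos_sum. intros. apply Rmult_le_pos; auto. apply g_nonneg.
Qed.

Lemma c_supp m x : (m * kappa < x)%nat -> conv_pow g m x = 0.
Proof.
  revert x; induction m; intros x Hx; simpl.
  - destruct x; simpl in *; [lia|reflexivity].
  - apply sum_eq_R0. intros y Hy.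
    destruct (Nat.lt_ge_cases (m * kappa) y).
    + rewrite IHm by auto. ring.
    + rewrite g_zero by (simpl in Hx; lia). ring.
Qed.

Lemma E m (f : nat -> R) :
  sum_f_R0 (fun x => conv_pow g (S m) x * f x) (S m * kappa) =
  sum_f_R0 (fun y => conv_pow g m y * sum_f_R0 (fun j => g j * f (y + j)%nat) kappa) (m * kappa).
Proof.
  set (A := fun y j => conv_pow g m y * g j * f (y + j)%nat).
  rewrite (sum_eq _ (fun x => sum_f_R0 (fun y => A y (x - y)%nat) x)).
  2:{ intros x Hx. simpl. rewrite Rmult_comm, scal_sum. apply sum_eq.
      intros y Hy. unfold A. replace (y + (x - y))%nat with x by lia. ring. }
  rewrite swap.
  rewrite (sum_eq _ (fun y => conv_pow g m y * sum_f_R0 (fun j => g j * f (y + j)%nat) kappa)).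
  2:{ intros y Hy. destruct (Nat.lt_ge_cases (m * kappa) y).
      - rewrite c_supp by auto. rewrite Rmult_0_l. apply sum_eq_R0. intros. unfold A.
        rewrite c_supp by auto. ring.
      - rewrite (trunc _ kappa). 2:{ intros j Hj. unfold A. rewrite g_zero by auto. ring. }
        2:{ simpl in Hy |- *. lia. }
        rewrite scal_sum. apply sum_eq. intros; unfold A; ring. }
  apply trunc.
  - intros y Hy. rewrite c_supp by auto. ring.
  - simpl. lia.
Qed.

Lemma gsum : sum_f_R0 g kappa = 1.
Proof.
  destruct Hg as (_ & _ & Hs & _). unfold sum_f in Hs.
  rewrite decomp_sum by lia. rewrite g0. rewrite <- Hs.
  replace (Init.Nat.pred kappa) with (kappa - 1)%nat by lia.
  rewrite Rplus_0_l. apply sum_eq. intros. f_equal. lia.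
Qed.

Lemma mass m : sum_f_R0 (conv_pow g m) (m * kappa) = 1.
Proof.
  induction m.
  - simpl. reflexivity.
  - transitivity (sum_f_R0 (fun x => conv_pow g (S m) x * 1) (S m * kappa)).
    { apply sum_eq; intros; ring. }
    rewrite E. transitivity (sum_f_R0 (conv_pow g m) (m * kappa)); [|exact IHm]. apply sum_eq. intros.
    rewrite (sum_eq _ g) by (intros; ring). rewrite gsum. ring.
Qed.

Variable h : nat -> R.
Hypothesis h_incr : forall p, h (S p) < h (S (S p)).

Lemma h_mono p q : (1 <= p <= q)%nat -> h p <= h q.
Proof.
  intros H. replace q with (p + (q - p))%nat by lia.
  generalize (q - p)%nat as d. induction d.
  - rewrite Nat.add_0_r; lra.
  - rewrite Nat.add_succ_r. destruct (p + d)%nat eqn:E0; [lia|].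
    pose proof (h_incr n). lra.
Qed.

Lemma psi b : h (S b) < sum_f_R0 (fun j => g j * h (b + j)%nat) kappa.
Proof.
  pose proof gsum as Hs.
  rewrite decomp_sum in Hs |- * by lia.
  rewrite decomp_sum in Hs |- * by lia.
  rewrite g0 in *.
  replace (b + 1)%nat with (S b) by lia.
  assert (L : sum_f_R0 (fun i => g (S (S i)) * h (S (S b))) (Init.Nat.pred (Init.Nat.pred kappa))
             <= sum_f_R0 (fun i => g (S (S i)) * h (b + S (S i))%nat) (Init.Nat.pred (Init.Nat.pred kappa))).
  { apply sum_Rle. intros. apply Rmult_le_compat_l. apply g_nonneg. apply h_mono. lia. }
  rewrite <- scal_sum in L.
  set (G := sum_f_R0 (fun i => g (S (S i))) (Init.Nat.pred (Init.Nat.pred kappa))) in *.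
  pose proof (h_incr b). destruct Hg as (_ & _ & _ & H1).
  simpl in Hs |- *. nra.
Qed.

Definition phi m a := sum_f_R0 (fun x => conv_pow g m x * h (a + x)%nat) (m * kappa).

Lemma step m a : phi m (S a) < phi (S m) a.
Proof.
  unfold phi. rewrite E.
  apply Rminus_gt_0_lt. rewrite sum_diff.
  apply sum_pos.
  - intros; apply c_nonneg.
  - intros y _. apply Rlt_Rminus.
    replace (S a + y)%nat with (S (a + y)) by lia.
    eapply Rlt_le_trans. apply (psi (a + y)).
    right. apply sum_eq. intros. f_equal. f_equal. lia.
  - rewrite mass; lra.
Qed.

Lemma chain m d a : phi m (a + S d) < phi (m + S d) a.
Proof.
  revert a; induction d; intros a.
  - replace (a + 1)%nat with (S a) by lia. replace (m + 1)%nat with (S m) by lia. apply step.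
  - replace (a + S (S d))%nat with (S a + S d)%nat by lia.
    replace (m + S (S d))%nat with (S (m + S d)) by lia.
    eapply Rlt_trans. apply IHd. apply step.
Qed.

End G.

Lemma series_finite (T : nat -> R) K : (forall j, (K < j)%nat -> T j = 0) -> Series T = sum_f_R0 T K.
Proof.
  intros HT. apply is_series_unique. apply is_series_Reals.
  intros eps Heps. exists K. intros n Hn. rewrite (trunc T K n) by auto.
  rewrite R_dist_eq. lra.
Qed.

Lemma shift (f : nat -> R) a K : (forall j, (j < a)%nat -> f j = 0) ->
  sum_f_R0 f (a + K) = sum_f_R0 (fun x => f (a + x)%nat) K.
Proof.
  revert f; induction a; intros f Hf.
  - reflexivity.
  - rewrite decomp_sum by lia. rewrite Hf by lia. rewrite Rplus_0_l.
    replace (Init.Nat.pred (S a + K)) with (a + K)%nat by lia.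
    rewrite (IHa (fun i => f (S i))). reflexivity. intros; apply Hf; lia.
Qed.

Lemma be_dist_phi F v kappa g M a : (2 <= kappa)%nat -> is_gammaA kappa g -> is_valuation_cdf F -> 0 < F v ->
  be_dist F v (Pnk g M a) = phi kappa g (be F v) (M - 1) a.
Proof.
  intros Hk Hg HF Hv. unfold be_dist, phi.
  rewrite (series_finite _ (a + (M - 1) * kappa)).
  - rewrite shift.
    + apply sum_eq. intros x _. unfold Pnk.
      replace (a <=? a + x)%nat with true by (symmetry; apply Nat.leb_le; lia).
      replace (a + x - a)%nat with x by lia.
      destruct (2 <=? a + x)%nat eqn:E2; auto.
      apply Nat.leb_gt in E2. destruct (a + x)%nat as [|[|]]; try lia.
      rewrite be_0; auto; ring. rewrite be_1; auto; ring.
    + intros j Hj. unfold Pnk. replace (a <=? j)%nat with false by (symmetry; apply Nat.leb_gt; lia).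
      destruct (2 <=? j)%nat; ring.
  - intros j Hj. destruct (2 <=? j)%nat; [|reflexivity]. unfold Pnk.
    destruct (a <=? j)%nat eqn:Ea; [|ring].
    rewrite (c_supp kappa g Hk Hg) by (apply Nat.leb_le in Ea; lia). ring.
Qed.

Theorem lemma2 (F : R -> R) (kappa : nat) (g : nat -> R) :
  is_valuation_cdf F ->
  standing_assumption F ->
  (2 <= kappa)%nat ->
  is_gammaA kappa g ->
  forall (k n : nat), (2 <= k)%nat -> (2 <= n)%nat ->
  forall v : R, 0 < F v ->
    be_dist F v (Pnk g (n + k - 1) 1) > be_dist F v (Pnk g n k).
Proof.
  intros HF _ Hk Hg k n Hk2 Hn2 v Hv.
  rewrite !(be_dist_phi F v kappa g) by auto.
  pose proof (chain kappa g Hk Hg (be F v) (be_incr F HF v Hv) (n - 1) (k - 2) 1) as C.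
  replace (1 + S (k - 2))%nat with k in C by lia.
  replace (n - 1 + S (k - 2))%nat with (n + k - 1 - 1)%nat in C by lia.
  exact C.
Qed.
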